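(* Let $K_{m,n}$ be the complete bipartite graph with parts of sizes $m$ and $n$, and let $k$ be a positive integer with $m,n\geq k$ and $m\geq n$. Then $\gamma_{gr}^{k}(K_{m,n})=m+k-1$, $\gamma_{gr}^{L,k}(K_{m,n})=m+k$, $\gamma_{gr}^{t,k}(K_{m,n})=2k$, and $\gamma_{gr}^{Z,k}(K_{m,n})=2k$ if $m>k$ (and $n\geq k$), while $\gamma_{gr}^{Z,k}(K_{m,n})=2k-1$ if $m=n=k$.
   Context: For a vertex $v$, $N(v)$ is its open neighborhood and $N[v]=N(v)\cup\{v\}$. A sequence $S=(v_1,\ldots,v_m)$ of distinct vertices is a $k$-sequence (resp. $k$-$L$-sequence, $k$-$Z$-sequence, $k$-$t$-sequence) if for each $i$ there is a vertex $u_i$ with $u_i\in N[v_i]$ (resp. $N[v_i]$, $N(v_i)$, $N(v_i)$) such that the number of indices $j<i$ with $u_i\in N[v_j]$ (resp. $N(v_j)$, $N[v_j]$, $N(v_j)$) is less than $k$. The numbers $\gamma_{gr}^{k}(G)$, $\gamma_{gr}^{L,k}(G)$, $\gamma_{gr}^{Z,k}(G)$, $\gamma_{gr}^{t,k}(G)$ are the maximum lengths of such sequences, respectively. *)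

(* Defs.v *)
From mathcomp Require Import all_boot.
Set Implicit Arguments. Unset Strict Implicit. Unset Printing Implicit Defensive.

Section Grundy.
Variable T : finType.

(* A simple graph is given by an adjacency relation [e] (assumed symmetric,
   irreflexive where relevant). *)
Definition onbhd (e : rel T) (v : T) : {set T} := [set u | e v u].
Definition cnbhd (e : rel T) (v : T) : {set T} := v |: onbhd e v.

Definition gen_seq (A B : T -> {set T}) (k : nat) (s : seq T) : bool :=
  uniq s &&
  [forall i : 'I_(size s),
     [exists u in A (tnth (in_tuple s) i),
        count (fun v => u \in B v) (take i s) < k]].

(* Maximum length of such a sequence (sequences are duplicate-free,
   hence have length at most #|T|). *)
Definition gen_gamma (A B : T -> {set T}) (k : nat) : nat :=
  \max_(n < #|T|.+1 | [exists t : n.-tuple T, gen_seq A B k t]) n.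

Definition gamma_gr   (e : rel T) k := gen_gamma (cnbhd e) (cnbhd e) k.
Definition gamma_grL  (e : rel T) k := gen_gamma (cnbhd e) (onbhd e) k.
Definition gamma_grZ  (e : rel T) k := gen_gamma (onbhd e) (cnbhd e) k.
Definition gamma_grt  (e : rel T) k := gen_gamma (onbhd e) (onbhd e) k.
End Grundy.

Definition Kbip (m n : nat) : rel ('I_m + 'I_n)%type :=
  fun x y => match x, y with
             | inl _, inr _ | inr _, inl _ => true
             | _, _ => false
             end.
Arguments Kbip : clear implicits.

(* Main.v *)
Require Import Defs.
From mathcomp Require Import all_boot zify.
Set Implicit Arguments. Unset Strict Implicit. Unset Printing Implicit Defensive.

Section Gen.
Variable T : finType.
Implicit Types (A B : T -> {set T}) (s p : seq T).

Definition Pc A B k (v : T) p := [exists u in A v, count (fun w => u \in B w) p < k].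

Lemma tnth_in x0 s (i : 'I_(size s)) : tnth (in_tuple s) i = nth x0 s i.
Proof. by rewrite (tnth_nth x0). Qed.

Lemma take_rc (p : seq T) v i : i <= size p -> take i (rcons p v) = take i p.
Proof. by move=> h; rewrite -cats1 takel_cat. Qed.

Lemma gen_seq_nil A B k : gen_seq A B k [::].
Proof. by rewrite /gen_seq /=; apply/forallP => -[]. Qed.

Lemma gen_seq_rcons A B k p v :
  gen_seq A B k (rcons p v) = [&& gen_seq A B k p, v \notin p & Pc A B k v p].
Proof.
rewrite /gen_seq rcons_uniq.
case: (v \in p) => //=; first by rewrite andbF.
case: (uniq p) => //=.
apply/forallP/andP.
- move=> H; split.
  + apply/forallP => i.
    have Hi : (i : nat) < size (rcons p v) by rewrite size_rcons ltnS ltnW.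
    have := H (Ordinal Hi).
    rewrite !(tnth_in v) /= nth_rcons ltn_ord -cats1 takel_cat //.
    exact: ltnW.
  + have Hi : size p < size (rcons p v) by rewrite size_rcons.
    have := H (Ordinal Hi).
    by rewrite (tnth_in v) /= nth_rcons ltnn eqxx -cats1 takel_cat // take_size.
- move=> [/forallP H1 H2] i.
  have Hi : (i : nat) < (size p).+1 by rewrite -(size_rcons p v) ltn_ord.
  rewrite ltnS leq_eqVlt in Hi.
  case/orP: Hi => Hi.
  + rewrite (tnth_in v) nth_rcons (eqP Hi) ltnn eqxx take_rc // take_size.
    exact: H2.
  + have := H1 (Ordinal Hi).
    by rewrite (tnth_in v) (tnth_in v) /= nth_rcons Hi take_rc // ltnW.
Qed.

Lemma gamma_ge A B k s : gen_seq A B k s -> size s <= gen_gamma A B k.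
Proof.
move=> H.
have Hs : size s < #|T|.+1.
  rewrite ltnS; case/andP: H => Hu _.
  by rewrite -(card_uniqP Hu) max_card.
rewrite /gen_gamma.
apply: (@leq_bigmax_cond _ _ (fun i : 'I_#|T|.+1 => (i : nat)) (Ordinal Hs)) => /=.
by apply/existsP; exists (in_tuple s).
Qed.

Lemma gamma_le A B k X : (forall s, gen_seq A B k s -> size s <= X) -> gen_gamma A B k <= X.
Proof.
move=> H; apply/bigmax_leqP => i /existsP [t Ht].
by have := H _ Ht; rewrite size_tuple.
Qed.
End Gen.
Set Implicit Arguments. Unset Strict Implicit. Unset Printing Implicit Defensive.

Section K.
Variables m n : nat.
Local Notation T := ('I_m + 'I_n)%type.
Local Notation K := (Kbip m n).

Definition isL (w : T) : bool := if w is inl _ then true else false.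
Definition isR (w : T) : bool := ~~ isL w.
Definition opp (u : T) : pred T := if u is inl _ then isR else isL.

Lemma countLR (s : seq T) : count isL s + count isR s = size s.
Proof. elim: s => //= w s IH; rewrite /isR in IH *; case: w => /= _; lia. Qed.

Lemma cnt_on (u : T) s : count (fun w => u \in onbhd K w) s = count (opp u) s.
Proof. elim: s => //= w s ->; rewrite inE /isR; by case: u => x; case: w => y. Qed.

Lemma cnt_cn (u : T) s : count (fun w => u \in cnbhd K w) s = count (opp u) s + count_mem u s.
Proof.
elim: s => //= w s ->; rewrite !inE /isR [w == u]eq_sym.
case: u => x; case: w => y /=. all: rewrite ?orbF; try case: (_ == _); rewrite /=; lia.
Qed.

Lemma bndL (s : seq T) : uniq s -> count isL s <= m.
Proof.
move=> Hu; rewrite -size_filter.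
have H : size (filter isL s) <= size (map (@inl 'I_m 'I_n) (enum 'I_m)).
  apply: uniq_leq_size; first exact: filter_uniq.
  move=> w; rewrite mem_filter; case: w => //= x _.
  by apply/mapP; exists x => //; rewrite mem_enum.
by rewrite size_map size_enum_ord in H.
Qed.

Lemma bndR (s : seq T) : uniq s -> count isR s <= n.
Proof.
move=> Hu; rewrite -size_filter.
have H : size (filter isR s) <= size (map (@inr 'I_m 'I_n) (enum 'I_n)).
  apply: uniq_leq_size; first exact: filter_uniq.
  move=> w; rewrite mem_filter; case: w => //= x _.
  by apply/mapP; exists x => //; rewrite mem_enum.
by rewrite size_map size_enum_ord in H.
Qed.

Lemma bnd_rc (p : seq T) w : uniq (rcons p w) ->
  count isL p + isL w <= m /\ count isR p + isR w <= n.
Proof.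
move=> Hu; have h1 := bndL Hu; have h2 := bndR Hu.
by rewrite -cats1 !count_cat /= !addn0 in h1 h2.
Qed.

Lemma cmem (p : seq T) u : uniq p ->
  (u \in p /\ count_mem u p = 1) \/ (uniq (rcons p u) /\ count_mem u p = 0).
Proof.
move=> Hu; rewrite count_uniq_mem //; case Hp: (u \in p); [left|right] => //.
by rewrite rcons_uniq Hp.
Qed.

Arguments isR _ /.
Arguments isL _ /.

Lemma ub_gr k s : k <= n -> n <= m -> gen_seq (cnbhd K) (cnbhd K) k s -> size s <= m + k - 1.
Proof.
move=> hkn hnm; case/lastP: s => [|p v] //.
rewrite gen_seq_rcons => /and3P [Hp Hv /existsP [u /andP [_ Hc]]].
have Hup : uniq p by case/andP: Hp.
have Hur : uniq (rcons p v) by rewrite rcons_uniq Hv Hup.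
have [h1 h2] := bnd_rc Hur.
have h3 := countLR p; clear Hv Hur.
rewrite cnt_cn in Hc; rewrite size_rcons -h3.
have [[hin hc]|[hu hc]] := cmem u Hup; rewrite hc in Hc.
- clear hin hc; move: h1 h2 Hc; case: v => x; case: u => y /=; lia.
- have [h4 h5] := bnd_rc hu; clear hu hc.
  move: h1 h2 h4 h5 Hc; case: v => x; case: u => y /=; lia.
Qed.

Lemma ub_L k s : k <= n -> n <= m -> gen_seq (cnbhd K) (onbhd K) k s -> size s <= m + k.
Proof.
move=> hkn hnm; case/lastP: s => [|p v] //.
rewrite gen_seq_rcons => /and3P [Hp Hv /existsP [u /andP [_ Hc]]].
have Hup : uniq p by case/andP: Hp.
have Hur : uniq (rcons p v) by rewrite rcons_uniq Hv Hup.
have [h1 h2] := bnd_rc Hur.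
have h3 := countLR p; clear Hv Hur.
rewrite cnt_on in Hc; rewrite size_rcons -h3.
move: h1 h2 Hc; case: v => x; case: u => y /=; lia.
Qed.

Lemma ub_inv (B : T -> {set T}) k s : (forall u p, count (opp u) p <= count (fun w => u \in B w) p) ->
  gen_seq (onbhd K) B k s -> count isL s <= k /\ count isR s <= k.
Proof.
move=> HB; elim/last_ind: s => [|p v IH] //.
rewrite gen_seq_rcons => /and3P [Hp Hv /existsP [u /andP [Hu Hc]]].
have [IH1 IH2] := IH Hp; clear Hv.
have Hc' := leq_ltn_trans (HB u p) Hc; clear Hc.
rewrite -cats1 !count_cat.
move: Hu Hc'; rewrite inE; case: v => x; case: u => y //= _; lia.
Qed.

Lemma ub_t k s : gen_seq (onbhd K) (onbhd K) k s -> size s <= 2 * k.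
Proof.
move=> H; have [h1 h2] := ub_inv (fun u p => eq_leq (esym (cnt_on u p))) H.
rewrite -countLR; lia.
Qed.

Lemma ub_Z k s : gen_seq (onbhd K) (cnbhd K) k s -> size s <= 2 * k.
Proof.
have HB : forall u p, count (opp u) p <= count (fun w => u \in cnbhd K w) p.
  by move=> u p; rewrite cnt_cn leq_addr.
move=> H; have [h1 h2] := ub_inv HB H.
rewrite -countLR; lia.
Qed.

Lemma ub_Zkk k s : m = k -> n = k -> gen_seq (onbhd K) (cnbhd K) k s -> size s <= 2 * k - 1.
Proof.
move=> hm hn; case/lastP: s => [|p v] //.
rewrite gen_seq_rcons => /and3P [Hp Hv /existsP [u /andP [Hu Hc]]].
have Hup : uniq p by case/andP: Hp.
have Hur : uniq (rcons p v) by rewrite rcons_uniq Hv Hup.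
have [h1 h2] := bnd_rc Hur.
have h3 := countLR p; clear Hv Hur.
rewrite cnt_cn in Hc; rewrite size_rcons -h3.
move: Hu; rewrite inE => Hu.
have [[hin hc]|[hu hc]] := cmem u Hup; rewrite hc in Hc.
- clear hin hc; move: h1 h2 Hc Hu; case: v => x; case: u => y //= ; lia.
- have [h4 h5] := bnd_rc hu; clear hu hc.
  move: h1 h2 h4 h5 Hc Hu; case: v => x; case: u => y //=; lia.
Qed.


Lemma cL_all (p : seq T) : all isL p -> count isL p = size p /\ count isR p = 0.
Proof. move=> H; have E : count isL p = size p by apply/eqP; rewrite -all_count.
split=> //; have := countLR p; lia. Qed.

Lemma cR_all (p : seq T) : all isR p -> count isR p = size p /\ count isL p = 0.
Proof. move=> H; have E : count isR p = size p by apply/eqP; rewrite -all_count.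
split=> //; have := countLR p; lia. Qed.

Lemma notin_allL (p : seq T) y : all isL p -> inr y \notin p.
Proof. by move=> /allP H; apply/negP => /H. Qed.

Lemma notin_allR (p : seq T) x : all isR p -> inl x \notin p.
Proof. by move=> /allP H; apply/negP => /H. Qed.

Lemma cmem_le1 (p : seq T) u : uniq p -> count_mem u p <= 1.
Proof. by move=> H; rewrite count_uniq_mem //; case: (_ \in _). Qed.

Lemma cmem0 (p : seq T) u : u \notin p -> count_mem u p = 0.
Proof. by move/count_memPn. Qed.

Lemma build (A B : T -> {set T}) k (s1 s2 : seq T) :
 uniq (s1 ++ s2) -> all isL s1 -> all isR s2 ->
 (forall p v, uniq (rcons p v) -> all isL (rcons p v) -> size p < size s1 -> Pc A B k v p) ->
 (forall q v, uniq (s1 ++ rcons q v) -> all isR (rcons q v) -> size q < size s2 -> Pc A B k v (s1 ++ q)) ->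
 gen_seq A B k (s1 ++ s2).
Proof.
move=> Hu HL HR H1 H2.
have G1 : forall t, uniq t -> all isL t -> size t <= size s1 -> gen_seq A B k t.
  elim/last_ind => [|t v IH] Hut HLt Hst; first exact: gen_seq_nil.
  rewrite gen_seq_rcons.
  move: (Hut); rewrite rcons_uniq => /andP [Hv Ht].
  move: (HLt); rewrite all_rcons => /andP [_ HLt'].
  rewrite size_rcons in Hst.
  rewrite IH ?Hv ?H1 //; exact: ltnW.
have G2 : forall t, uniq (s1 ++ t) -> all isR t -> size t <= size s2 -> gen_seq A B k (s1 ++ t).
  elim/last_ind => [|t v IH] Hut HRt Hst.
    rewrite cats0 in Hut *; apply: G1 => //.
  have Hut' : uniq (rcons (s1 ++ t) v) by move: Hut; rewrite rcons_cat.
  move: (Hut'); rewrite rcons_uniq => /andP [Hv Ht].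
  move: (HRt); rewrite all_rcons => /andP [_ HRt'].
  rewrite size_rcons in Hst.
  suff : gen_seq A B k (rcons (s1 ++ t) v) by rewrite rcons_cat.
  rewrite gen_seq_rcons IH ?Hv ?H2 //; exact: ltnW.
by apply: G2.
Qed.

Definition sL j : seq T := map inl (take j (enum 'I_m)).
Definition sR j : seq T := map inr (take j (enum 'I_n)).

Lemma sLR_uniq j l : uniq (sL j ++ sR l).
Proof.
rewrite cat_uniq !map_inj_uniq ?take_uniq ?enum_uniq //; last by move=> a b [].
2: by move=> a b [].
rewrite andbT /=; apply/hasPn => w /mapP [y _ ->]; apply/negP => /mapP [x _] //.
Qed.

Lemma sL_all j : all isL (sL j).
Proof. by rewrite all_map; apply/allP. Qed.
Lemma sR_all j : all isR (sR j).
Proof. by rewrite all_map; apply/allP. Qed.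
Lemma size_sL j : j <= m -> size (sL j) = j.
Proof. by move=> h; rewrite size_map size_takel // size_enum_ord. Qed.
Lemma size_sR j : j <= n -> size (sR j) = j.
Proof. by move=> h; rewrite size_map size_takel // size_enum_ord. Qed.

Lemma exists_notin (s : seq T) : size s < m -> exists x : 'I_m, inl x \notin s.
Proof.
move=> hs; case: (pickP (fun x : 'I_m => inl x \notin s)) => [x Hx|H]; first by exists x.
exfalso.
have : size (map (@inl 'I_m 'I_n) (enum 'I_m)) <= size s.
  apply: uniq_leq_size; first by rewrite map_inj_uniq ?enum_uniq // => a b [].
  by move=> w /mapP [x _ ->]; have := H x => /negbFE.
rewrite size_map size_enum_ord; lia.
Qed.


Lemma mem_cn (u v : T) : (u \in cnbhd K v) = (u == v) || K v u.
Proof. by rewrite /cnbhd /onbhd !inE. Qed.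
Lemma mem_on (u v : T) : (u \in onbhd K v) = K v u.
Proof. by rewrite /onbhd !inE. Qed.

Lemma uniq_pre (s1 q : seq T) v : uniq (s1 ++ rcons q v) -> uniq (s1 ++ q).
Proof. by rewrite -rcons_cat rcons_uniq => /andP []. Qed.

Lemma lb_gr k : 0 < k -> k <= n -> k <= m ->
  gen_seq (cnbhd K) (cnbhd K) k (sL m ++ sR (k - 1)).
Proof.
move=> hk hkn hkm.
pose x0 : 'I_m := Ordinal (leq_trans hk hkm).
apply: build; [exact: sLR_uniq | exact: sL_all | exact: sR_all | |].
- move=> p v Hu HL _; move: Hu HL; rewrite rcons_uniq all_rcons => /andP [Hv _] /andP [Hl Hp].
  case: v Hv Hl => // x Hv _; apply/existsP; exists (inl x).
  rewrite mem_cn eqxx /= cnt_cn cmem0 //; have [_ ->] := cL_all Hp; lia.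
- move=> q v Hu HR Hs; rewrite size_sR in Hs; last lia.
  move: HR; rewrite all_rcons => /andP [Hr Hq]; case: v Hr Hu => // y _ Hu.
  apply/existsP; exists (inl x0); rewrite mem_cn /= cnt_cn count_cat.
  have [-> _] := cR_all Hq; have [_ ->] := cL_all (sL_all m).
  rewrite add0n; apply: leq_ltn_trans (leq_add (leqnn (size q)) (cmem_le1 (inl x0) (uniq_pre Hu))) _; lia.
Qed.

Lemma lb_L k : 0 < k -> k <= n -> k <= m ->
  gen_seq (cnbhd K) (onbhd K) k (sL m ++ sR k).
Proof.
move=> hk hkn hkm.
pose x0 : 'I_m := Ordinal (leq_trans hk hkm).
apply: build; [exact: sLR_uniq | exact: sL_all | exact: sR_all | |].
- move=> p v Hu HL _; move: Hu HL; rewrite rcons_uniq all_rcons => /andP [Hv _] /andP [Hl Hp].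
  case: v Hv Hl => // x Hv _; apply/existsP; exists (inl x).
  rewrite mem_cn eqxx /= cnt_on; have [_ ->] := cL_all Hp; lia.
- move=> q v Hu HR Hs; rewrite size_sR in Hs; last lia.
  move: HR; rewrite all_rcons => /andP [Hr Hq]; case: v Hr Hu => // y _ Hu.
  apply/existsP; exists (inl x0); rewrite mem_cn /= cnt_on count_cat.
  have [-> _] := cR_all Hq; have [_ ->] := cL_all (sL_all m); lia.
Qed.

Lemma lb_t k : 0 < k -> k <= n -> k <= m ->
  gen_seq (onbhd K) (onbhd K) k (sL k ++ sR k).
Proof.
move=> hk hkn hkm.
pose x0 : 'I_m := Ordinal (leq_trans hk hkm).
pose y0 : 'I_n := Ordinal (leq_trans hk hkn).
apply: build; [exact: sLR_uniq | exact: sL_all | exact: sR_all | |].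
- move=> p v Hu HL Hs; rewrite size_sL in Hs => //.
  move: HL; rewrite all_rcons => /andP [Hl Hp].
  case: v Hl Hu => // x _ Hu; apply/existsP; exists (inr y0).
  rewrite mem_on /= cnt_on; have [-> _] := cL_all Hp; exact Hs.
- move=> q v Hu HR Hs; rewrite size_sR in Hs => //.
  move: HR; rewrite all_rcons => /andP [Hr Hq]; case: v Hr Hu => // y _ Hu.
  apply/existsP; exists (inl x0); rewrite mem_on /= cnt_on count_cat.
  have [-> _] := cR_all Hq; have [_ ->] := cL_all (sL_all k); lia.
Qed.

Lemma lb_Z k : 0 < k -> k <= n -> k < m ->
  gen_seq (onbhd K) (cnbhd K) k (sL k ++ sR k).
Proof.
move=> hk hkn hkm.
pose y0 : 'I_n := Ordinal (leq_trans hk hkn).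
have [x Hx] : exists x : 'I_m, inl x \notin sL k by apply: exists_notin; rewrite size_sL // ltnW.
apply: build; [exact: sLR_uniq | exact: sL_all | exact: sR_all | |].
- move=> p v Hu HL Hs; rewrite size_sL in Hs; last exact: ltnW.
  move: HL; rewrite all_rcons => /andP [Hl Hp].
  case: v Hl Hu => // x' _ Hu; apply/existsP; exists (inr y0).
  rewrite mem_on /= cnt_cn cmem0 ?notin_allL //; have [-> _] := cL_all Hp; rewrite addn0; exact Hs.
- move=> q v Hu HR Hs; rewrite size_sR in Hs => //.
  move: HR; rewrite all_rcons => /andP [Hr Hq]; case: v Hr Hu => // y _ Hu.
  apply/existsP; exists (inl x); rewrite mem_on /= cnt_cn count_cat cmem0.
    have [-> _] := cR_all Hq; have [_ ->] := cL_all (sL_all k); lia.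
  by rewrite mem_cat negb_or Hx notin_allR.
Qed.

Lemma lb_Zkk k : 0 < k -> k <= n -> k <= m ->
  gen_seq (onbhd K) (cnbhd K) k (sL k ++ sR (k - 1)).
Proof.
move=> hk hkn hkm.
pose x0 : 'I_m := Ordinal (leq_trans hk hkm).
pose y0 : 'I_n := Ordinal (leq_trans hk hkn).
apply: build; [exact: sLR_uniq | exact: sL_all | exact: sR_all | |].
- move=> p v Hu HL Hs; rewrite size_sL in Hs => //.
  move: HL; rewrite all_rcons => /andP [Hl Hp].
  case: v Hl Hu => // x' _ Hu; apply/existsP; exists (inr y0).
  rewrite mem_on /= cnt_cn cmem0 ?notin_allL //; have [-> _] := cL_all Hp; rewrite addn0; exact Hs.
- move=> q v Hu HR Hs; rewrite size_sR in Hs; last lia.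
  move: HR; rewrite all_rcons => /andP [Hr Hq]; case: v Hr Hu => // y _ Hu.
  apply/existsP; exists (inl x0); rewrite mem_on /= cnt_cn count_cat.
  have [-> _] := cR_all Hq; have [_ ->] := cL_all (sL_all k).
  rewrite add0n; apply: leq_ltn_trans (leq_add (leqnn (size q)) (cmem_le1 (inl x0) (uniq_pre Hu))) _; lia.
Qed.

End K.

Lemma gamma_eq (T : finType) (A B : T -> {set T}) k X s0 :
  (forall s, gen_seq A B k s -> size s <= X) -> gen_seq A B k s0 -> size s0 = X ->
  gen_gamma A B k = X.
Proof. by move=> H1 H2 H3; apply/eqP; rewrite eqn_leq gamma_le // -H3 gamma_ge. Qed.

Theorem mainTheorem7 (m n k : nat) :
  0 < k -> k <= m -> k <= n -> n <= m ->
  [/\ gamma_gr (Kbip m n) k = m + k - 1,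
      gamma_grL (Kbip m n) k = m + k,
      gamma_grt (Kbip m n) k = 2 * k,
      (k < m -> gamma_grZ (Kbip m n) k = 2 * k)
    & (m = k /\ n = k -> gamma_grZ (Kbip m n) k = 2 * k - 1)].
Proof.
move=> hk hkm hkn hnm; split.
- rewrite /gamma_gr; apply: (gamma_eq _ (lb_gr hk hkn hkm)); first by move=> s; apply: ub_gr.
  rewrite size_cat size_sL // size_sR; lia.
- rewrite /gamma_grL; apply: (gamma_eq _ (lb_L hk hkn hkm)); first by move=> s; apply: ub_L.
  rewrite size_cat size_sL // size_sR; lia.
- rewrite /gamma_grt; apply: (gamma_eq _ (lb_t hk hkn hkm)); first by move=> s; apply: ub_t.
  rewrite size_cat size_sL // size_sR; lia.
- move=> hlt; rewrite /gamma_grZ; apply: (gamma_eq _ (lb_Z hk hkn hlt)); first by move=> s; apply: ub_Z.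
  rewrite size_cat size_sL // size_sR; lia.
- move=> [hm hn]; rewrite /gamma_grZ; apply: (gamma_eq _ (lb_Zkk hk hkn hkm)); first by move=> s; apply: ub_Zkk.
  rewrite size_cat size_sL // size_sR; lia.
Qed.
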